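(* Let $(J,[\cdot,\cdot],\alpha,B)$ be a finite-dimensional multiplicative metric Hom-Jacobi-Jordan algebra. Then (1) the center $\mathfrak Z(J)$ is an ideal of $J$; (2) $\mathfrak Z(J)=[J,J]^{\perp}$, and consequently $\dim\mathfrak Z(J)+\dim[J,J]=\dim J$.
   Context: A Hom-Jacobi-Jordan algebra is $(J,[\cdot,\cdot],\alpha)$ with $[\cdot,\cdot]$ symmetric bilinear, $\alpha$ linear and $[\alpha(x),[y,z]]+[\alpha(y),[z,x]]+[\alpha(z),[x,y]]=0$ for all $x,y,z$; it is multiplicative if $\alpha([x,y])=[\alpha(x),\alpha(y)]$. A metric Hom-Jacobi-Jordan algebra is $(J,[\cdot,\cdot],\alpha,B)$ with $B$ a nondegenerate symmetric bilinear form such that $B(x,[y,z])=B([x,y],z)$ and $B(\alpha(x),y)=B(x,\alpha(y))$ for all $x,y,z$. An ideal is a subspace $I$ with $[I,J]\subset I$ and $\alpha(I)\subset I$. The center is $\mathfrak Z(J)=\{x\in J: [x,y]=0\ \forall y\in J\}$; $[J,J]$ is the span of all $[x,y]$; for a subspace $W$, $W^\perp=\{x: B(x,w)=0\ \forall w\in W\}$. *)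

(* Defs.v *)
From HB Require Import structures.
From mathcomp Require Import all_boot all_order all_algebra.
Set Implicit Arguments. Unset Strict Implicit. Unset Printing Implicit Defensive.
Import GRing.Theory.
Local Open Scope ring_scope.

Section HomJJ.
Variables (K : fieldType) (V : vectType K).

Definition bilinear_map (br : V -> V -> V) : Prop :=
  (forall (a : K) (x y z : V), br (a *: x + y) z = a *: br x z + br y z) /\
  (forall (a : K) (x y z : V), br x (a *: y + z) = a *: br x y + br x z).

Definition linear_map (f : V -> V) : Prop :=
  forall (a : K) (x y : V), f (a *: x + y) = a *: f x + f y.

Definition bilinear_form (B : V -> V -> K) : Prop :=
  (forall (a : K) (x y z : V), B (a *: x + y) z = a * B x z + B y z) /\
  (forall (a : K) (x y z : V), B x (a *: y + z) = a * B x y + B x z).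

Definition hom_jacobi_jordan (br : V -> V -> V) (alpha : V -> V) : Prop :=
  [/\ bilinear_map br, linear_map alpha,
      (forall x y, br x y = br y x) &
      (forall x y z, br (alpha x) (br y z) + br (alpha y) (br z x)
                     + br (alpha z) (br x y) = 0)].

Definition hom_multiplicative (br : V -> V -> V) (alpha : V -> V) : Prop :=
  forall x y, alpha (br x y) = br (alpha x) (alpha y).

Definition metric_hom_jacobi_jordan (br : V -> V -> V) (alpha : V -> V)
    (B : V -> V -> K) : Prop :=
  [/\ hom_jacobi_jordan br alpha,
      bilinear_form B /\ (forall x y, B x y = B y x),
      (forall x, (forall y, B x y = 0) -> x = 0),
      (forall x y z, B x (br y z) = B (br x y) z) &
      (forall x y, B (alpha x) y = B x (alpha y))].

Definition is_ideal (br : V -> V -> V) (alpha : V -> V) (I : {vspace V}) : Prop :=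
  (forall x y, x \in I -> br x y \in I) /\ (forall x, x \in I -> alpha x \in I).

Definition central (br : V -> V -> V) (x : V) : Prop := forall y, br x y = 0.

Definition is_center (br : V -> V -> V) (Z : {vspace V}) : Prop :=
  forall x, x \in Z <-> central br x.

Definition is_derived (br : V -> V -> V) (D : {vspace V}) : Prop :=
  (forall x y, br x y \in D) /\
  (forall U : {vspace V}, (forall x y, br x y \in U) -> (D <= U)%VS).

Definition in_perp (B : V -> V -> K) (W : {vspace V}) (x : V) : Prop :=
  forall w, w \in W -> B x w = 0.

End HomJJ.

(* Main.v *)
Require Import Defs.
From HB Require Import structures.
From mathcomp Require Import all_boot all_order all_algebra.
Import GRing.Theory.
Local Open Scope ring_scope.
Import VectorInternalTheory.
From mathcomp Require Import ring.

Section Aux.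
Variables (K : fieldType) (V : vectType K) (B : V -> V -> K).
Hypothesis HB : bilinear_form B.

Lemma B0l y : B 0 y = 0.
Proof.
have h := (proj1 HB) 1 0 0 y; move: h; rewrite scale1r addr0 mul1r => h.
by apply: (addrI (B 0 y)); rewrite addr0 -h.
Qed.

Lemma B0r y : B y 0 = 0.
Proof.
have h := (proj2 HB) 1 y 0 0; move: h; rewrite scale1r addr0 mul1r => h.
by apply: (addrI (B y 0)); rewrite addr0 -h.
Qed.

Lemma Bsuml m (a : 'I_m -> K) (u : 'I_m -> V) y :
  B (\sum_(i < m) a i *: u i) y = \sum_(i < m) a i * B (u i) y.
Proof.
elim/big_rec2: _ => [|i s t _ IH]; first exact: B0l.
by rewrite (proj1 HB) IH.
Qed.

Lemma Bsumr m (a : 'I_m -> K) (u : 'I_m -> V) y :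
  B y (\sum_(i < m) a i *: u i) = \sum_(i < m) a i * B y (u i).
Proof.
elim/big_rec2: _ => [|i s t _ IH]; first exact: B0r.
by rewrite (proj2 HB) IH.
Qed.

Definition gram : 'M[K]_(dim V) :=
  \matrix_(i, j) B (r2v (delta_mx 0 i)) (r2v (delta_mx 0 j)).

Lemma gramE x y : B x y = (v2r x *m gram *m (v2r y)^T) 0 0.
Proof.
rewrite -{1}(v2rK x) -{1}(v2rK y) {1}(row_sum_delta (v2r x)) {1}(row_sum_delta (v2r y)).
rewrite !linear_sum /=.
under eq_bigr do rewrite linearZ /=.
rewrite Bsuml.
under [LHS]eq_bigr => i _ do (under eq_bigr => j _ do rewrite linearZ /=; rewrite Bsumr).
rewrite !mxE.
under [RHS]eq_bigr => j _ do rewrite !mxE big_distrl /=.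
rewrite exchange_big /=; apply: eq_bigr => i _; rewrite big_distrr /=.
by apply: eq_bigr => j _; rewrite !mxE; ring.
Qed.

Lemma gramE' x w : B x w = (v2r w *m (v2r x *m gram)^T) 0 0.
Proof. by rewrite gramE -[v2r w in RHS]trmxK -trmx_mul [RHS]mxE. Qed.

Hypothesis Hnd : forall x, (forall y, B x y = 0) -> x = 0.

Lemma gram_free : row_free gram.
Proof.
rewrite -kermx_eq0; apply/eqP/row_matrixP => i; rewrite row0.
have := row_sub i (kermx gram); rewrite sub_kermx => /eqP h.
have: r2v (row i (kermx gram)) = 0.
  by apply: Hnd => y; rewrite gramE r2vK h !mul0mx mxE.
by move/(congr1 v2r); rewrite r2vK linear0.
Qed.

Lemma memvK' v (U : {vspace V}) : (v \in U) = (v2r v <= vs2mx U)%MS.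
Proof. by rewrite -genmxE. Qed.

Lemma perp_mx (D : {vspace V}) x :
  in_perp B D x <-> (v2r x *m gram *m (vs2mx D)^T == 0).
Proof.
split.
  move=> H; apply/eqP/rowP => j; rewrite [RHS]mxE.
  have -> : (v2r x *m gram *m (vs2mx D)^T) 0 j
          = (v2r x *m gram *m (row j (vs2mx D))^T) 0 0.
    by rewrite !mxE; apply: eq_bigr => k _; rewrite !mxE.
  rewrite -[row j _]r2vK -gramE; apply: H.
  by rewrite memvK' r2vK row_sub.
move/eqP=> h w; rewrite memvK' => /submxP [r hr].
by rewrite gramE hr trmx_mul mulmxA h mul0mx mxE.
Qed.
End Aux.

Lemma br0l (K : fieldType) (V : vectType K) (br : V -> V -> V) :
  bilinear_map br -> forall y, br 0 y = 0.
Proof.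
move=> Hb y; have h := (proj1 Hb) 1 0 0 y; move: h; rewrite !scale1r addr0 => h.
by apply: (addrI (br 0 y)); rewrite addr0 -h.
Qed.

Theorem proposition6p3 (K : fieldType) (V : vectType K)
    (br : V -> V -> V) (alpha : V -> V) (B : V -> V -> K) :
  metric_hom_jacobi_jordan br alpha B ->
  hom_multiplicative br alpha ->
  (forall Z : {vspace V}, is_center br Z -> is_ideal br alpha Z) /\
  (forall Z D : {vspace V}, is_center br Z -> is_derived br D ->
     (forall x, x \in Z <-> in_perp B D x) /\
     (\dim Z + \dim D = \dim (fullv : {vspace V}))%N).
Proof.
move=> [[Hbr Hal Hcomm Hjj] [HBl Hsym] Hnd Hinv Hadj] Hmul.
split.
  move=> Z HZ; split.
    by move=> x y /HZ hx; rewrite (hx y) mem0v.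
  move=> x /HZ hx; apply/HZ => y; apply: Hnd => z.
  by rewrite -Hinv Hadj Hmul Hinv hx (@B0l _ _ _ HBl).
move=> Z D HZ [HD1 HD2].
have memZ : forall x, x \in Z <-> in_perp B D x.
  move=> x; split.
    move/HZ=> hx.
    have sub : (D <= mx2vs (kermx (v2r x *m @gram _ _ B)^T))%VS.
      apply: HD2 => y z; rewrite (@memvK' _ _) mx2vsK sub_kermx.
      apply/eqP/matrixP => i j; rewrite !ord1 -(@gramE' _ _ _ HBl) [RHS]mxE.
      by rewrite Hinv hx (@B0l _ _ _ HBl).
    move=> w wD; have := subvP sub w wD.
    by rewrite (@memvK' _ _) mx2vsK sub_kermx => /eqP h; rewrite (@gramE' _ _ _ HBl) h mxE.
  move=> hp; apply/HZ => y; apply: Hnd => z; rewrite -Hinv; apply: hp; apply: HD1.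
split; first exact: memZ.
have eZ : Z = mx2vs (kermx (@gram _ _ B *m (vs2mx D)^T)).
  apply/vspaceP => x; rewrite [in RHS](@memvK' _ _) mx2vsK sub_kermx mulmxA.
  apply/idP/idP.
    by move/memZ; rewrite (@perp_mx _ _ _ HBl).
  by move=> h; apply/memZ; rewrite (@perp_mx _ _ _ HBl).
rewrite eZ /dimv mx2vsK mxrank_ker.
rewrite -mxrank_tr trmx_mul trmxK mxrankMfree; last first.
  by rewrite /row_free mxrank_tr; apply: (@gram_free _ _ _ HBl Hnd).
have := dimvf V; rewrite /dimv => ->.
by rewrite subnK // rank_leq_row.
Qed.
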